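(* Let $\mathcal C=\mathcal C(I,A,(\rho_i)_{i\in I},(C^a)_{a\in A})$ be a Cartan scheme and $\mathcal R=\mathcal R(\mathcal C,(R^a)_{a\in A})$ a root system of type $\mathcal C$. For $a\in A$ let $(R^a)^{\mathrm{re}}=\{\omega(\alpha_i)\mid \omega\in\mathrm{Hom}(b,a),\ b\in A,\ i\in I\}$. Then $\mathcal R^{\mathrm{re}}=\mathcal R(\mathcal C,((R^a)^{\mathrm{re}})_{a\in A})$ is a root system of type $\mathcal C$, and $\mathcal W(\mathcal R^{\mathrm{re}})=\mathcal W(\mathcal R)$.
   Context: Let $I$ be a nonempty finite set and $\{\alpha_i\mid i\in I\}$ the standard basis of $\mathbb Z^I$; $\mathbb N_0=\{0,1,2,\dots\}$. A generalized Cartan matrix is $C=(c_{ij})_{i,j\in I}\in\mathbb Z^{I\times I}$ with $c_{ii}=2$, $c_{jk}\le0$ for $j\ne k$, and $c_{ij}=0\Rightarrow c_{ji}=0$. A Cartan scheme $\mathcal C=\mathcal C(I,A,(\rho_i)_{i\in I},(C^a)_{a\in A})$ consists of a nonempty set $A$, maps $\rho_i:A\to A$ and generalized Cartan matrices $C^a=(c^a_{jk})_{j,k\in I}$ such that (C1) $\rho_i^2=\mathrm{id}$ and (C2) $c^a_{ij}=c^{\rho_i(a)}_{ij}$ for all $a\in A$, $i,j\in I$. For $i\in I$, $a\in A$ let $\sigma_i^a\in\mathrm{Aut}(\mathbb Z^I)$, $\sigma_i^a(\alpha_j)=\alpha_j-c^a_{ij}\alpha_i$. The Weyl groupoid $\mathcal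 W(\mathcal C)$ has object set $A$; $\mathrm{Hom}(a,b)$ consists of the triples $(b,f,a)$ with $f=\sigma_{i_n}^{a_{n-1}}\cdots\sigma_{i_1}^{a_0}$, where $n\ge0$, $i_1,\dots,i_n\in I$, $a_0=a$, $a_k=\rho_{i_k}(a_{k-1})$, $a_n=b$ (one writes $\omega(v)=f(v)$ for $\omega=(b,f,a)$); composition is multiplication in $\mathrm{Aut}(\mathbb Z^I)$. A root system of type $\mathcal C$ is a family $\mathcal R=\mathcal R(\mathcal C,(R^a)_{a\in A})$ of subsets $R^a\subset\mathbb Z^I$ such that, writing $R^a_+=R^a\cap\mathbb N_0^I$ and $m^a_{i,j}=|R^a\cap(\mathbb N_0\alpha_i+\mathbb N_0\alpha_j)|$, for all $a\in A$, $i,j\in I$: (R1) $R^a=R^a_+\cup(-R^a_+)$; (R2) $R^a\cap\mathbb Z\alpha_i=\{\alpha_i,-\alpha_i\}$; (R3) $\sigma_i^a(R^a)=R^{\rho_i(a)}$; (R4) if $i\neq j$ and $m^a_{i,j}$ is finite then $(\rho_i\rho_j)^{m^a_{i,j}}(a)=a$. The Weyl groupoid $\mathcal W(\mathcal R)$ of a root system of type $\mathcal C$ is defined to be $\mathcal W(\mathcal C)$. *)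

(* Defs.v *)
From HB Require Import structures.
From mathcomp Require Import all_boot all_order all_algebra.
Set Implicit Arguments. Unset Strict Implicit. Unset Printing Implicit Defensive.
Import Order.TTheory GRing.Theory Num.Theory.
Local Open Scope ring_scope.

Notation vec I := {ffun I -> int}.

Section CartanDefs.
Variables (I : finType) (A : Type).
Local Notation vec := (vec I).

Definition alpha (i : I) : vec := [ffun j => ((i == j) : nat)%:Z].

Definition scalev (k : int) (v : vec) : vec := [ffun x => k * v x].

Definition nonneg (v : vec) : Prop := forall k, 0 <= v k.

Definition gen_cartan_matrix (c : I -> I -> int) : Prop :=
  (forall i, c i i = 2) /\
  (forall j k, j != k -> c j k <= 0) /\
  (forall i j, c i j = 0 -> c j i = 0).

Definition cartan_scheme (rho : I -> A -> A) (C : A -> I -> I -> int) : Prop :=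
  (0 < #|I|)%N /\ inhabited A /\
  (forall a, gen_cartan_matrix (C a)) /\
  (forall i a, rho i (rho i a) = a) /\
  (forall a i j, C a i j = C (rho i a) i j).

(* sigma_i^a, the linear map with sigma_i^a(alpha_j) = alpha_j - c^a_ij alpha_i *)
Definition sigma (C : A -> I -> I -> int) (a : A) (i : I) (v : vec) : vec :=
  v - scalev (\sum_j C a i j * v j) (alpha i).

Fixpoint wend (rho : I -> A -> A) (a : A) (w : seq I) : A :=
  if w is i :: w' then wend rho (rho i a) w' else a.

(* the map sigma_{i_n}^{a_{n-1}} ... sigma_{i_1}^{a_0} *)
Fixpoint wmap (rho : I -> A -> A) (C : A -> I -> I -> int) (a : A) (w : seq I)
  (v : vec) : vec :=
  if w is i :: w' then wmap rho C (rho i a) w' (sigma C a i v) else v.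

Definition weyl_hom (rho : I -> A -> A) (C : A -> I -> I -> int) (a b : A)
  (f : vec -> vec) : Prop :=
  exists w : seq I, wend rho a w = b /\ forall v, f v = wmap rho C a w v.

Definition has_card (S : vec -> Prop) (n : nat) : Prop :=
  exists s : seq vec, uniq s /\ size s = n /\ forall v, S v <-> v \in s.

Definition root_system (rho : I -> A -> A) (C : A -> I -> I -> int)
  (R : A -> vec -> Prop) : Prop :=
  (forall a v, R a v <-> ((R a v /\ nonneg v) \/
                          (exists u, R a u /\ nonneg u /\ v = - u))) /\
  (forall a i v, (R a v /\ exists k : int, v = scalev k (alpha i)) <->
                 (v = alpha i \/ v = - alpha i)) /\
  (forall a i v, R (rho i a) v <-> exists u, R a u /\ v = sigma C a i u) /\
  (forall a i j, i != j -> forall m : nat,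
     has_card (fun v => R a v /\ exists p q : nat,
                 v = scalev (p%:Z) (alpha i) + scalev (q%:Z) (alpha j)) m ->
     iter m (fun x => rho i (rho j x)) a = a).

(* Weyl groupoid of a root system of type C: by definition W(C) *)
Definition rs_weyl_hom (rho : I -> A -> A) (C : A -> I -> I -> int)
  (R : A -> vec -> Prop) : A -> A -> (vec -> vec) -> Prop :=
  weyl_hom rho C.

Definition real_roots (rho : I -> A -> A) (C : A -> I -> I -> int) (a : A)
  (v : vec) : Prop :=
  exists (b : A) (f : vec -> vec) (i : I), weyl_hom rho C b a f /\ v = f (alpha i).

End CartanDefs.

(* Main.v *)
Require Import Defs.
From HB Require Import structures.
From mathcomp Require Import all_boot all_order all_algebra.
From mathcomp Require Import ring zify.
From Stdlib Require Import Classical.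
Set Implicit Arguments. Unset Strict Implicit. Unset Printing Implicit Defensive.
Import Order.TTheory GRing.Theory Num.Theory.
Local Open Scope ring_scope.

Section S.
Variables (I : finType) (A : Type) (rho : I -> A -> A) (C : A -> I -> I -> int).

Lemma sigma_other a l (v : vec I) m : l != m -> sigma C a l v m = v m.
Proof. by move=> h; rewrite /sigma !ffunE /= (negbTE h) mulr0 subr0. Qed.

Lemma sigmaD a l (u v : vec I) : sigma C a l (u + v) = sigma C a l u + sigma C a l v.
Proof.
apply/ffunP=> m; rewrite /sigma !ffunE.
have -> : \sum_j C a l j * (u + v) j = \sum_j C a l j * u j + \sum_j C a l j * v j.
  by rewrite -big_split; apply: eq_bigr => k _; rewrite ffunE mulrDr.
ring.
Qed.

Lemma sigmaN a l (u : vec I) : sigma C a l (- u) = - sigma C a l u.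
Proof.
apply/ffunP=> m; rewrite /sigma !ffunE.
have -> : \sum_j C a l j * (- u) j = - \sum_j C a l j * u j.
  by rewrite -sumrN; apply: eq_bigr => k _; rewrite ffunE mulrN.
ring.
Qed.

Lemma sigmaZ a l k (u : vec I) : sigma C a l (scalev k u) = scalev k (sigma C a l u).
Proof.
apply/ffunP=> m; rewrite /sigma !ffunE.
have -> : \sum_j C a l j * (scalev k u) j = k * \sum_j C a l j * u j.
  by rewrite mulr_sumr; apply: eq_bigr => x _; rewrite ffunE; ring.
ring.
Qed.

Lemma sum_alpha a l : \sum_j C a l j * alpha l j = C a l l.
Proof.
rewrite (bigD1 l) //= big1 ?addr0; first by rewrite ffunE eqxx mulr1.
by move=> k hk; rewrite ffunE eq_sym (negbTE hk) mulr0.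
Qed.

Lemma sigma_alpha a l : C a l l = 2 -> sigma C a l (alpha l) = - alpha l.
Proof.
move=> h; apply/ffunP=> m; rewrite /sigma sum_alpha h !ffunE; ring.
Qed.

Lemma sigmaK a l (v : vec I) : C a l l = 2 -> sigma C a l (sigma C a l v) = v.
Proof.
move=> h.
have e : sigma C a l v = v - scalev (\sum_j C a l j * v j) (alpha l) by [].
rewrite {1}e.
have -> : v - scalev (\sum_j C a l j * v j) (alpha l) = v + scalev (- \sum_j C a l j * v j) (alpha l).
  by apply/ffunP=> m; rewrite !ffunE; ring.
rewrite sigmaD sigmaZ sigma_alpha // e; apply/ffunP=> m; rewrite !ffunE; ring.
Qed.

Lemma sigma_ext a b l (v : vec I) : (forall j, C a l j = C b l j) -> sigma C a l v = sigma C b l v.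
Proof. by move=> h; rewrite /sigma; congr (_ - scalev _ _); apply: eq_bigr => k _; rewrite h. Qed.
Hypothesis Hrr : forall i a, rho i (rho i a) = a.
Hypothesis Hrow : forall a i j, C a i j = C (rho i a) i j.
Hypothesis H2 : forall a i, C a i i = 2.

Lemma wmapD a w (u v : vec I) : wmap rho C a w (u + v) = wmap rho C a w u + wmap rho C a w v.
Proof. by elim: w a u v => [|l w IH] a u v //=; rewrite sigmaD IH. Qed.
Lemma wmapN a w (u : vec I) : wmap rho C a w (- u) = - wmap rho C a w u.
Proof. by elim: w a u => [|l w IH] a u //=; rewrite sigmaN IH. Qed.
Lemma wmapZ a w k (u : vec I) : wmap rho C a w (scalev k u) = scalev k (wmap rho C a w u).
Proof. by elim: w a u => [|l w IH] a u //=; rewrite sigmaZ IH. Qed.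
Lemma wend_cat a w1 w2 : wend rho a (w1 ++ w2) = wend rho (wend rho a w1) w2.
Proof. by elim: w1 a => [|l w IH] a //=. Qed.
Lemma wmap_cat a w1 w2 v : wmap rho C a (w1 ++ w2) v = wmap rho C (wend rho a w1) w2 (wmap rho C a w1 v).
Proof. by elim: w1 a v => [|l w IH] a v //=. Qed.

Lemma sigma_rho a l v : sigma C (rho l a) l v = sigma C a l v.
Proof. by apply: sigma_ext => j; rewrite -Hrow. Qed.

Lemma wend_rev a w : wend rho (wend rho a w) (rev w) = a.
Proof.
elim: w a => [|l w IH] a //=.
by rewrite rev_cons -cats1 wend_cat IH /= Hrr.
Qed.
Lemma wmap_rev a w v : wmap rho C (wend rho a w) (rev w) (wmap rho C a w v) = v.
Proof.
elim: w a v => [|l w IH] a v //=.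
by rewrite rev_cons -cats1 wmap_cat IH wend_rev /= sigma_rho sigmaK.
Qed.
Lemma wmap_rev' a w v : wmap rho C a w (wmap rho C (wend rho a w) (rev w) v) = v.
Proof.
have := wmap_rev (wend rho a w) (rev w) v; rewrite revK wend_rev; exact.
Qed.
Variable R : A -> vec I -> Prop.
Hypothesis R1 : forall a v, R a v <-> ((R a v /\ nonneg v) \/
                          (exists u, R a u /\ nonneg u /\ v = - u)).
Hypothesis R2 : forall a i v, (R a v /\ exists k : int, v = scalev k (alpha i)) <->
                 (v = alpha i \/ v = - alpha i).
Hypothesis R3 : forall a i v, R (rho i a) v <-> exists u, R a u /\ v = sigma C a i u.

Lemma alpha_ii (l : I) : alpha l l = 1. Proof. by rewrite ffunE eqxx. Qed.
Lemma alpha_ne (l m : I) : l != m -> alpha l m = 0. Proof. by rewrite ffunE => /negbTE ->. Qed.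

Lemma R_nz a v (l : I) : R a v -> v <> 0.
Proof.
move=> hv e; subst v.
have [] : 0 = alpha l \/ 0 = - alpha l.
  apply/(R2 a l); split=> //; exists 0; apply/ffunP=> m; rewrite !ffunE mul0r //.
- move/ffunP/(_ l); rewrite alpha_ii ffunE //=; lia.
- move/ffunP/(_ l); rewrite !ffunE eqxx //=; lia.
Qed.

Lemma R_sign a v : R a v -> nonneg v \/ nonneg (- v).
Proof.
move=> /R1 [[_ h]|[u [_ [hu ->]]]]; [by left | right].
by move=> k; rewrite opprK.
Qed.

Lemma R_opp a v : R a v -> R a (- v).
Proof.
move=> hv; have := hv; move/R1 => [[_ h]|[u [hu [_ ->]]]].
- by apply/R1; right; exists v.
- by rewrite opprK.
Qed.

Lemma nonneg_both (v : vec I) : nonneg v -> nonneg (- v) -> v = 0.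
Proof.
move=> h1 h2; apply/ffunP=> m; rewrite ffunE; apply/eqP; rewrite eq_le h1 andbT.
by have := h2 m; rewrite ffunE oppr_ge0.
Qed.

Lemma posF2 b l x : R b x -> nonneg x -> x <> alpha l -> nonneg (sigma C b l x).
Proof.
move=> Rx nx nal.
have Rs : R (rho l b) (sigma C b l x) by apply/R3; exists x.
case: (R_sign Rs) => // hneg.
have ex : x = scalev (x l) (alpha l).
  apply/ffunP=> m; rewrite ffunE; case: (eqVneq l m) => [<-|hlm].
    by rewrite alpha_ii mulr1.
  rewrite alpha_ne // mulr0; apply/eqP; rewrite eq_le nx andbT.
  by have := hneg m; rewrite ffunE sigma_other // oppr_ge0.
have [//|ex'] : x = alpha l \/ x = - alpha l by apply/(R2 b l); split=> //; exists (x l).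
by have := nx l; rewrite ex' !ffunE eqxx.
Qed.

Lemma negF2 b l x : R b x -> nonneg (- x) -> x <> - alpha l -> nonneg (- sigma C b l x).
Proof.
move=> Rx nx nal; rewrite -sigmaN; apply: posF2 => //; first exact: R_opp.
by move=> e; apply: nal; rewrite -e opprK.
Qed.

Lemma R_pres a w v : R a v -> R (wend rho a w) (wmap rho C a w v).
Proof.
elim: w a v => [|l w IH] a v //= hv; apply: IH; apply/R3; by exists v.
Qed.

Lemma alpha_R b l : R b (alpha l).
Proof. by have /(R2 b l) [] : alpha l = alpha l \/ alpha l = - alpha l by left. Qed.

Lemma real_inv a v : real_roots rho C a v ->
  exists b w l, wend rho b w = a /\ v = wmap rho C b w (alpha l).
Proof. by move=> [b [f [l [[w [hw hf]] ->]]]]; exists b, w, l; rewrite hf. Qed.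

Lemma real_of b w l : real_roots rho C (wend rho b w) (wmap rho C b w (alpha l)).
Proof. by exists b, (wmap rho C b w), l; split=> //; exists w. Qed.

Lemma real_sub a v : real_roots rho C a v -> R a v.
Proof. by move/real_inv=> [b [w [l [<- ->]]]]; apply: R_pres; apply: alpha_R. Qed.

Lemma real_opp a v : real_roots rho C a v -> real_roots rho C a (- v).
Proof.
move/real_inv=> [b [w [l [<- ->]]]].
have := real_of (rho l b) (l :: w) l.
by rewrite /= Hrr sigma_rho sigma_alpha // wmapN.
Qed.
Notation real := (real_roots rho C).

Lemma real_R1 a v : real a v <-> ((real a v /\ nonneg v) \/
                          (exists u, real a u /\ nonneg u /\ v = - u)).
Proof.
split.
- move=> hv; case: (R_sign (real_sub hv)) => h; [by left | right].
  by exists (- v); rewrite opprK; split=> //; apply: real_opp.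
- by move=> [[]|[u [hu [_ ->]]]] //; apply: real_opp.
Qed.

Lemma real_alpha a l : real a (alpha l).
Proof. by have := real_of a [::] l. Qed.

Lemma real_R2 a (i : I) v : (real a v /\ exists k : int, v = scalev k (alpha i)) <->
                 (v = alpha i \/ v = - alpha i).
Proof.
split.
- by move=> [hv hk]; apply/(R2 a i); split=> //; apply: real_sub.
- move=> [->|->]; split.
  + exact: real_alpha.
  + by exists 1; apply/ffunP=> m; rewrite !ffunE mul1r.
  + by apply: real_opp; apply: real_alpha.
  + by exists (-1); apply/ffunP=> m; rewrite !ffunE mulN1r.
Qed.

Lemma real_R3 a i v : real (rho i a) v <-> exists u, real a u /\ v = sigma C a i u.
Proof.
split.
- move/real_inv=> [b [w [l [hw ->]]]].
  exists (wmap rho C b (w ++ [:: i]) (alpha l)); split.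
    by have := real_of b (w ++ [:: i]) l; rewrite wend_cat hw /= Hrr.
  by rewrite wmap_cat /= hw sigma_rho sigmaK.
- move=> [u [/real_inv [b [w [l [hw ->]]]] ->]].
  by have := real_of b (w ++ [:: i]) l; rewrite wend_cat hw wmap_cat hw.
Qed.
Definition supp (i j : I) (v : vec I) := forall m, m != i -> m != j -> v m = 0.
Definition cone (i j : I) (v : vec I) :=
  exists p q : nat, v = scalev (p%:Z) (alpha i) + scalev (q%:Z) (alpha j).

Lemma cone_nn i j v : cone i j v -> nonneg v /\ supp i j v.
Proof.
move=> [p [q ->]]; split.
- by move=> m; rewrite !ffunE; apply: addr_ge0; apply: mulr_ge0.
- by move=> m hi hj; rewrite !ffunE eq_sym (negbTE hi) eq_sym (negbTE hj) !mulr0 addr0.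
Qed.

Lemma decomp i j (x : vec I) : i != j -> supp i j x ->
  x = scalev (x i) (alpha i) + scalev (x j) (alpha j).
Proof.
move=> hij hs; apply/ffunP=> m; rewrite !ffunE.
case: (eqVneq i m) => [<-|him].
  by rewrite ?eqxx [j == i]eq_sym (negbTE hij) /= mulr0 addr0 mulr1.
case: (eqVneq j m) => [<-|hjm]; first by rewrite mulr0 mulr1 add0r.
by rewrite !mulr0 addr0 hs // eq_sym.
Qed.

Lemma nn_cone i j v : i != j -> nonneg v -> supp i j v -> cone i j v.
Proof.
move=> hij hn hs; exists `|v i|%N, `|v j|%N.
by rewrite !gez0_abs //; apply: decomp.
Qed.

Lemma supp_wmap i j b w x : all (fun l => (l == i) || (l == j)) w -> supp i j x ->
  supp i j (wmap rho C b w x).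
Proof.
elim: w b x => [|l w IH] b x //= /andP [hl hw] hx; apply: IH => // m hi hj.
rewrite sigma_other ?hx //; apply/eqP=> e; subst m.
by move: hl; rewrite (negbTE hi) (negbTE hj).
Qed.

Lemma neg_combo i j b w x : i != j ->
  nonneg (- wmap rho C b w (alpha i)) -> nonneg (- wmap rho C b w (alpha j)) ->
  nonneg x -> supp i j x -> nonneg (- wmap rho C b w x).
Proof.
move=> hij hi hj hx hs; rewrite (decomp hij hs) wmapD !wmapZ => m.
have := hi m; have := hj m; have := hx i; have := hx j; rewrite !ffunE.
move=> a1 a2 a3 a4; rewrite opprD -!mulrN; apply: addr_ge0; apply: mulr_ge0 => //.
Qed.
Definition lt (i j : I) k := if odd k then j else i.
Fixpoint alt (i j : I) k : seq I := if k is k'.+1 then rcons (alt i j k') (lt i j k') else [::].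
Definition bo a i j k := wend rho a (alt i j k).
Definition fk a i j k v := wmap rho C a (alt i j k) v.
Definition gk a i j k v := wmap rho C (bo a i j k) (rev (alt i j k)) v.
Definition beta a i j k := gk a i j k (alpha (lt i j k)).

Lemma alt_all i j k : all (fun l => (l == i) || (l == j)) (alt i j k).
Proof.
elim: k => [|k IH] //=; rewrite -cats1 all_cat IH /= /lt andbT.
by case: (odd k); rewrite eqxx ?orbT.
Qed.

Lemma fkS a i j k v : fk a i j k.+1 v = sigma C (bo a i j k) (lt i j k) (fk a i j k v).
Proof. by rewrite /fk /bo /= -cats1 wmap_cat. Qed.
Lemma fgK a i j k v : fk a i j k (gk a i j k v) = v.
Proof. exact: wmap_rev'. Qed.
Lemma gfK a i j k v : gk a i j k (fk a i j k v) = v.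
Proof. exact: wmap_rev. Qed.
Lemma beta_real a i j k : real a (beta a i j k).
Proof. by have := real_of (bo a i j k) (rev (alt i j k)) (lt i j k); rewrite /bo wend_rev. Qed.
Lemma fk_beta a i j k : fk a i j k (beta a i j k) = alpha (lt i j k).
Proof. exact: fgK. Qed.
Lemma fkS_beta a i j k : fk a i j k.+1 (beta a i j k) = - alpha (lt i j k).
Proof. by rewrite fkS fk_beta sigma_alpha. Qed.
Lemma gk_inj a i j k u v : gk a i j k u = gk a i j k v -> u = v.
Proof. by move=> e; rewrite -(fgK a i j k u) e fgK. Qed.
Lemma gkN a i j k v : gk a i j k (- v) = - gk a i j k v.
Proof. exact: wmapN. Qed.
Lemma nonneg_alpha (l : I) : nonneg (alpha l).
Proof. by move=> m; rewrite ffunE; case: (l == m). Qed.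

Lemma supp_alpha_lt i j k : supp i j (alpha (lt i j k)).
Proof.
move=> m hi hj; rewrite /lt; case: (odd k); apply: alpha_ne; by rewrite eq_sym.
Qed.

Lemma main_contra a i j m v : i != j ->
  has_card (fun v => real a v /\ cone i j v) m -> R a v -> cone i j v -> ~ real a v -> False.
Proof.
move=> hij hcard Rv cv nr.
have [nv sv] := cone_nn cv.
have Hf : forall k, nonneg (fk a i j k v).
  elim=> [|k IH] //; rewrite fkS; apply: posF2 => //; first exact: R_pres.
  by move=> e; apply: nr; rewrite -(gfK a i j k v) e; apply: beta_real.
have Hs : forall k, supp i j (fk a i j k v).
  by move=> k; apply: supp_wmap => //; apply: alt_all.
have Hb : forall k, nonneg (beta a i j k).
  elim=> [|k IH]; first exact: nonneg_alpha.
  case: (R_sign (real_sub (beta_real a i j k.+1))) => // hneg; exfalso.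
  have e1 : gk a i j k.+1 (alpha (lt i j k)) = - beta a i j k.
    by rewrite -[alpha _]opprK gkN -(fkS_beta a i j k) gfK.
  have hA : nonneg (- gk a i j k.+1 (alpha (lt i j k))) by rewrite e1 opprK.
  have hB : nonneg (- gk a i j k.+1 (alpha (lt i j k.+1))) by exact: hneg.
  have [hi hj] : nonneg (- gk a i j k.+1 (alpha i)) /\ nonneg (- gk a i j k.+1 (alpha j)).
    by move: hA hB; rewrite /lt /=; case: (odd k) => /= hA hB; split.
  have hv := neg_combo (b:=bo a i j k.+1) (w:=rev (alt i j k.+1)) hij hi hj (Hf k.+1) (Hs k.+1).
  have hv' : nonneg (- v) by rewrite -(gfK a i j k.+1 v); exact: hv.
  apply: (R_nz i Rv); exact: nonneg_both.
have Hd : forall d s, nonneg (- fk a i j (s + d).+1 (beta a i j s)).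
  move=> d s; elim: d => [|d IH].
    by rewrite addn0 fkS_beta opprK; apply: nonneg_alpha.
  rewrite addnS fkS; apply: negF2 => //.
    by apply: R_pres; apply: real_sub; apply: beta_real.
  move=> e.
  have e2 : beta a i j s = - beta a i j (s + d).+1.
    by rewrite -(gfK a i j (s + d).+1 (beta a i j s)) e gkN.
  have h0 : beta a i j s = 0.
    by apply: nonneg_both => //; rewrite e2 opprK.
  exact: (R_nz i (real_sub (beta_real a i j s)) h0).
have Hlt : forall s k, (s < k)%N -> beta a i j s = beta a i j k -> False.
  move=> s k hsk e; have := Hd (k - s.+1)%N s.
  rewrite -addSn subnKC // e fk_beta => h; have := h (lt i j k).
  by rewrite !ffunE eqxx.
have Hinj : injective (beta a i j).
  move=> s k e; case: (ltngtP s k) => // h; exfalso.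
  - exact: Hlt h e.
  - exact: Hlt h (esym e).
move: hcard => [sq [hu [hsz hin]]].
have sub : {subset map (beta a i j) (iota 0 m.+1) <= sq}.
  move=> x /mapP [k _ ->]; apply/hin; split; first exact: beta_real.
  apply: nn_cone => //; apply: supp_wmap; first by rewrite all_rev alt_all.
  exact: supp_alpha_lt.
have := uniq_leq_size _ sub.
by rewrite size_map size_iota hsz map_inj_uniq ?iota_uniq // ltnn => /(_ isT).
Qed.
Hypothesis R4 : forall a i j, i != j -> forall m : nat,
     has_card (fun v => R a v /\ exists p q : nat,
                 v = scalev (p%:Z) (alpha i) + scalev (q%:Z) (alpha j)) m ->
     iter m (fun x => rho i (rho j x)) a = a.

Lemma has_card_ext (P Q : vec I -> Prop) m : has_card P m -> (forall v, P v <-> Q v) -> has_card Q m.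
Proof. by move=> [s [hu [hs hin]]] h; exists s; split=> //; split=> // v; rewrite -h. Qed.

Lemma real_rs : root_system rho C real.
Proof.
split; first exact: real_R1.
split; first exact: real_R2.
split; first exact: real_R3.
move=> a i j hij m hc; apply: (R4 hij).
apply: (has_card_ext hc) => v; split.
- by move=> [hv hcv]; split=> //; apply: real_sub.
- move=> [hv hcv]; split=> //; apply: NNPP => nr.
  exact: (main_contra hij hc hv hcv nr).
Qed.
End S.

Theorem proposition2p9 (I : finType) (A : Type) (rho : I -> A -> A)
  (C : A -> I -> I -> int) (R : A -> vec I -> Prop) :
  cartan_scheme rho C -> root_system rho C R ->
  root_system rho C (real_roots rho C) /\
  rs_weyl_hom rho C (real_roots rho C) = rs_weyl_hom rho C R.
Proof.
move=> [_ [_ [Hg [Hrr Hrow]]]] [R1 [R2 [R3 R4]]]; split=> //.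
apply: (real_rs Hrr Hrow _ R1 R2 R3 R4).
by move=> a l; case: (Hg a).
Qed.
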